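(* Let $\pi^{\mathrm{cen},*}\in S^{\mathrm{cen}}$. (a) For any $\varepsilon\ge0$, any optimizer $(\pi^*_1,\dots,\pi^*_N,\pi^*_c)$ of the CAL problem with parameter $\varepsilon$, and any $i$, $V_{N^{-1}\mathbf{1}}(\pi^{\mathrm{cen},*})\le V_{N^{-1}\mathbf{1}}(\pi^*_i)$. (b) For any $j\in\{1,\dots,N\}$ and $\pi^{\mathrm{dec},*}_j\in S^{\mathrm{dec}}_j$, if $V_{N^{-1}\mathbf{1}}(\pi^{\mathrm{cen},*})<V_{N^{-1}\mathbf{1}}(\pi^{\mathrm{dec},*}_j)$, then there exists $\varepsilon>0$ such that $V_{N^{-1}\mathbf{1}}(\pi^*_j)\le V_{N^{-1}\mathbf{1}}(\pi^{\mathrm{dec},*}_j)$ for every optimizer $(\pi^*_1,\dots,\pi^*_N,\pi^*_c)$ of the CAL problem with parameter $\varepsilon$.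
   Context: Let $\mathcal{S},\mathcal{A}$ be finite sets, $\gamma\in(0,1)$, $\rho$ a probability distribution on $\mathcal{S}$, and for $i=1,\dots,N$ environment $i$ is the Markov decision process $(\mathcal{S},\mathcal{A},P^i,\gamma,\rho)$. $\Pi$ is the set of stationary policies $\pi:\mathcal{S}\to\Delta(\mathcal{A})$ ($\pi(s,a)$ = probability of $a$ at $s$). $\mu^\pi_i(s,a)=\sum_{t\ge0}\gamma^t\mathbb{P}^{\pi,i}_\rho[s_t=s,a_t=a]$ is the discounted occupation measure (trajectory law: $s_0\sim\rho$, $a_t\sim\pi(s_t,\cdot)$, $s_{t+1}\sim P^i(\cdot\mid s_t,a_t)$). Expert policies $\pi^{E_i}\in\Pi$ and a cost basis matrix $\Phi\in\mathbb{R}^{|\mathcal{S}||\mathcal{A}|\times n_c}$ with columns of sup-norm at most $1$ are given. For $\beta$ in the probability simplex of $\mathbb{R}^N$, $V_\beta(\pi)=\sum_{i=1}^N\beta_i\|\Phi^\top\mu^\pi_i-\Phi^\top\mu^{\pi^{E_i}}_i\|_1$; $N^{-1}\mathbf{1}$ is the vector with all entries $1/N$. $S^{\mathrm{dec}}_j=\arg\min_{\pi\in\Pi}\|\Phi^\top\mu^\pi_j-\Phi^\top\mu^{\pi^{E_j}}_j\|_1$ and $S^{\mathrm{cen}}=\arg\min_{\pi\in\Pi}\sum_{i=1}^N\|\Phi^\top\mu^\pi_i-\Phi^\top\mu^{\pi^{E_i}}_i\|_1$. The CAL problem with parameter $\varepsilon\ge0$ is: minimize $\sum_{i=1}^N\|\Phi^\top\mu^{\pi_i}_i-\Phi^\top\mu^{\pi^{E_i}}_i\|_1$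 over $(\pi_1,\dots,\pi_N,\pi_c)\in\Pi^{N+1}$ subject to $\max_{(s,a)}|\pi_i(s,a)-\pi_c(s,a)|\le\varepsilon$ for all $i$. *)

(* Defs.v *)
From HB Require Import structures.
From mathcomp Require Import all_boot all_order all_algebra.
From mathcomp Require Import all_classical all_reals all_analysis.
Set Implicit Arguments. Unset Strict Implicit. Unset Printing Implicit Defensive.
Import Order.TTheory GRing.Theory Num.Theory.
Local Open Scope ring_scope.

Section CAL.
Variables (R : realType) (S A : finType).

Definition is_policy (pi : S -> A -> R) : Prop :=
  (forall s a, 0 <= pi s a) /\ (forall s, \sum_(a : A) pi s a = 1).

Definition is_distr (rho : S -> R) : Prop :=
  (forall s, 0 <= rho s) /\ \sum_(s : S) rho s = 1.

(* transition kernel: P s a s' = P(s' | s, a) *)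
Definition is_kernel (P : S -> A -> S -> R) : Prop :=
  forall s a, is_distr (P s a).

(* law of s_t under s_0 ~ rho, a_t ~ pi(s_t,.), s_{t+1} ~ P(.|s_t,a_t) *)
Fixpoint state_law (P : S -> A -> S -> R) (rho : S -> R) (pi : S -> A -> R)
    (t : nat) : S -> R :=
  match t with
  | 0 => rho
  | t'.+1 => fun s' => \sum_(s : S) \sum_(a : A)
              state_law P rho pi t' s * pi s a * P s a s'
  end.

Definition sa_law P rho pi t (s : S) (a : A) : R := state_law P rho pi t s * pi s a.

Definition occupation (gamma : R) P rho pi (s : S) (a : A) : R :=
  limn (fun n => \sum_(0 <= t < n) gamma ^+ t * sa_law P rho pi t s a).

(* || Phi^T mu - Phi^T mu' ||_1, Phi : (S*A) x nc matrix given entrywise *)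
Definition feat_dist (nc : nat) (Phi : S * A -> 'I_nc -> R)
    (mu mu' : S -> A -> R) : R :=
  \sum_(k < nc) `| \sum_(sa : S * A) Phi sa k * mu sa.1 sa.2
                  - \sum_(sa : S * A) Phi sa k * mu' sa.1 sa.2 |.

Definition env_loss (N nc : nat) (gamma : R) (P : 'I_N -> S -> A -> S -> R)
    (rho : S -> R) (Phi : S * A -> 'I_nc -> R) (piE : 'I_N -> S -> A -> R)
    (i : 'I_N) (pi : S -> A -> R) : R :=
  feat_dist Phi (occupation gamma (P i) rho pi) (occupation gamma (P i) rho (piE i)).

Definition Vbeta (N nc : nat) gamma P rho Phi piE (beta : 'I_N -> R)
    (pi : S -> A -> R) : R :=
  \sum_(i < N) beta i * @env_loss N nc gamma P rho Phi piE i pi.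

Definition unif (N : nat) : 'I_N -> R := fun _ => (N%:R)^-1.

Definition S_dec (N nc : nat) gamma P rho Phi piE (j : 'I_N) (pi : S -> A -> R) : Prop :=
  is_policy pi /\ forall pi', is_policy pi' ->
    @env_loss N nc gamma P rho Phi piE j pi <= env_loss gamma P rho Phi piE j pi'.

Definition S_cen (N nc : nat) gamma P rho Phi piE (pi : S -> A -> R) : Prop :=
  is_policy pi /\ forall pi', is_policy pi' ->
    \sum_(i < N) @env_loss N nc gamma P rho Phi piE i pi
    <= \sum_(i < N) env_loss gamma P rho Phi piE i pi'.

Definition CAL_feasible (N : nat) (eps : R) (pis : 'I_N -> S -> A -> R)
    (pic : S -> A -> R) : Prop :=
  (forall i, is_policy (pis i)) /\ is_policy pic /\
  forall i s a, `| pis i s a - pic s a | <= eps.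

Definition CAL_objective (N nc : nat) gamma P rho Phi piE
    (pis : 'I_N -> S -> A -> R) : R :=
  \sum_(i < N) @env_loss N nc gamma P rho Phi piE i (pis i).

Definition CAL_optimizer (N nc : nat) gamma P rho Phi piE (eps : R)
    (pis : 'I_N -> S -> A -> R) (pic : S -> A -> R) : Prop :=
  CAL_feasible eps pis pic /\
  forall pis' pic', CAL_feasible eps pis' pic' ->
    @CAL_objective N nc gamma P rho Phi piE pis
    <= CAL_objective gamma P rho Phi piE pis'.

End CAL.

(* Main.v *)
Require Import Defs.
From HB Require Import structures.
From mathcomp Require Import all_boot all_order all_algebra.
From mathcomp Require Import all_classical all_reals all_analysis.
From mathcomp Require Import ring lra.
Import Order.TTheory GRing.Theory Num.Theory.
Local Open Scope classical_set_scope.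
Local Open Scope ring_scope.
Set Implicit Arguments. Unset Strict Implicit.

Section Aux.
Variables (R : realType) (S A : finType).
Variables (P : S -> A -> S -> R) (rho : S -> R).
Hypothesis Hrho : is_distr rho.
Hypothesis HP : is_kernel P.

Lemma sl_ge0 (pi : S -> A -> R) : is_policy pi ->
  forall t s, 0 <= state_law P rho pi t s.
Proof.
move=> [pi0 _]; elim=> [|t IH] s /=; first by case: Hrho.
apply: sumr_ge0 => s' _; apply: sumr_ge0 => a _.
by rewrite mulr_ge0 ?mulr_ge0 //; case: (HP s' a).
Qed.

Lemma sl_sum1 (pi : S -> A -> R) : is_policy pi ->
  forall t, \sum_s state_law P rho pi t s = 1.
Proof.
move=> [pi0 pi1]; elim=> [|t IH] /=; first by case: Hrho.
rewrite exchange_big /= -[RHS]IH; apply: eq_bigr => s _.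
rewrite exchange_big /=.
transitivity (\sum_a state_law P rho pi t s * pi s a).
  apply: eq_bigr => a _; rewrite -mulr_sumr.
  by case: (HP s a) => _ ->; rewrite mulr1.
by rewrite -mulr_sumr pi1 mulr1.
Qed.

Lemma le_sum1 (T : finType) (f : T -> R) x : (forall y, 0 <= f y) ->
  f x <= \sum_y f y.
Proof.
move=> f0; rewrite (bigD1 x) //= lerDl; exact: sumr_ge0.
Qed.

Lemma sa_law_le1 pi : is_policy pi -> forall t s a,
  0 <= sa_law P rho pi t s a <= 1.
Proof.
move=> Hpi t s a; rewrite /sa_law.
have h1 := sl_ge0 Hpi t s.
have h2 : state_law P rho pi t s <= 1.
  by rewrite -(sl_sum1 Hpi t); apply: le_sum1 => y; exact: sl_ge0.
case: Hpi => p0 p1.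
have h3 : pi s a <= 1 by rewrite -(p1 s); apply: le_sum1.
rewrite mulr_ge0 //=; have := p0 s a; nra.
Qed.

Lemma key (x x' : S -> R) (pi pi' : S -> A -> R) (d : R) :
  is_policy pi -> (forall s, 0 <= x' s) -> \sum_s x' s = 1 ->
  (forall s a, `|pi s a - pi' s a| <= d) ->
  \sum_s \sum_a `|x s * pi s a - x' s * pi' s a|
    <= \sum_s `|x s - x' s| + #|A|%:R * d.
Proof.
move=> [p0 p1] x0 x1 hd.
apply: (@le_trans _ _ (\sum_s (`|x s - x' s| + x' s * (#|A|%:R * d)))).
  apply: ler_sum => s _.
  apply: (@le_trans _ _ (\sum_a (`|x s - x' s| * pi s a + x' s * `|pi s a - pi' s a|))).
    apply: ler_sum => a _.
    have -> : x s * pi s a - x' s * pi' s a = (x s - x' s) * pi s a + x' s * (pi s a - pi' s a) by ring.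
    apply: (le_trans (ler_normD _ _)).
    by rewrite !normrM (ger0_norm (p0 s a)) (ger0_norm (x0 s)).
  rewrite big_split /= -mulr_sumr p1 mulr1 lerD2l -mulr_sumr.
  apply: ler_wpM2l => //.
  apply: (@le_trans _ _ (\sum_(a : A) d)); first by apply: ler_sum.
  by rewrite sumr_const mulr_natl.
rewrite big_split /= lerD2l -mulr_suml x1 mul1r //.
Qed.

Lemma dist_t (pi pi' : S -> A -> R) (d : R) : is_policy pi -> is_policy pi' ->
  (forall s a, `|pi s a - pi' s a| <= d) -> forall t,
  \sum_s `|state_law P rho pi t s - state_law P rho pi' t s| <= t%:R * (#|A|%:R * d).
Proof.
move=> Hp Hp' hd; elim=> [|t IH] /=.
  by rewrite mul0r; under eq_bigr do rewrite subrr normr0; rewrite big1.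
apply: (@le_trans _ _ (\sum_s \sum_a `|state_law P rho pi t s * pi s a
      - state_law P rho pi' t s * pi' s a|)).
  apply: (@le_trans _ _ (\sum_s' \sum_s \sum_a `|state_law P rho pi t s * pi s a
      - state_law P rho pi' t s * pi' s a| * P s a s')).
    apply: ler_sum => s' _.
    rewrite -sumrB; apply: (le_trans (ler_norm_sum _ _ _)); apply: ler_sum => s _.
    rewrite -sumrB; apply: (le_trans (ler_norm_sum _ _ _)); apply: ler_sum => a _.
    rewrite -mulrBl normrM (@ger0_norm _ (P s a s')) //.
    by case: (HP s a) => h _; apply: h.
  rewrite exchange_big; apply: ler_sum => s _ /=.
  rewrite exchange_big; apply: ler_sum => a _ /=.
  by rewrite -mulr_sumr; case: (HP s a) => _ ->; rewrite mulr1.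
apply: (le_trans (key (state_law P rho pi t) Hp (sl_ge0 Hp' t) (sl_sum1 Hp' t) hd)).
by rewrite -nat1r mulrDl mul1r addrC lerD2l.
Qed.

Lemma sa_sum (pi pi' : S -> A -> R) (d : R) : is_policy pi -> is_policy pi' ->
  (forall s a, `|pi s a - pi' s a| <= d) -> forall t,
  \sum_(sa : S * A) `|sa_law P rho pi t sa.1 sa.2 - sa_law P rho pi' t sa.1 sa.2|
    <= t.+1%:R * (#|A|%:R * d).
Proof.
move=> Hp Hp' hd t.
rewrite -(pair_bigA _ (fun s a => `|sa_law P rho pi t s a - sa_law P rho pi' t s a|)) /=.
apply: (le_trans (key (state_law P rho pi t) Hp (sl_ge0 Hp' t) (sl_sum1 Hp' t) hd)).
by rewrite -nat1r mulrDl mul1r addrC lerD2l; apply: dist_t.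
Qed.
End Aux.

Lemma geom_bound (R : realType) (g : R) : 0 <= g < 1 -> forall n,
  \sum_(0 <= t < n) g ^+ t * t.+1%:R <= ((1 - g) ^+ 2)^-1.
Proof.
move=> /andP[g0 g1] n.
have e : forall n, (1 - g) ^+ 2 * \sum_(0 <= t < n) g ^+ t * t.+1%:R
   = 1 - n.+1%:R * g ^+ n + n%:R * g ^+ n.+1.
  elim=> [|m IH]; first by rewrite big_geq // mulr0 expr0 mul1r mul0r; ring.
  rewrite big_nat_recr //= mulrDr IH -!nat1r !exprS; ring.
have gp : 0 < (1 - g) ^+ 2 by rewrite exprn_gt0 // subr_gt0.
rewrite -(ler_pM2l gp) mulrV ?unitfE ?gt_eqF // e.
have h : n%:R * g ^+ n.+1 <= n.+1%:R * g ^+ n.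
  have hg : g ^+ n.+1 <= g ^+ n by rewrite exprS ler_piMl // ?exprn_ge0 // ltW.
  have h1 : n%:R * g ^+ n.+1 <= n%:R * g ^+ n by apply: ler_wpM2l.
  have h2 : n%:R * g ^+ n <= n.+1%:R * g ^+ n.
    by apply: ler_wpM2r; rewrite ?exprn_ge0 // ler_nat.
  exact: le_trans h1 h2.
lra.
Qed.

Section Occ.
Variables (R : realType) (S A : finType).
Variables (P : S -> A -> S -> R) (rho : S -> R) (gamma : R).
Hypothesis Hrho : is_distr rho.
Hypothesis HP : is_kernel P.
Hypothesis Hg : 0 < gamma < 1.

Definition psum (pi : S -> A -> R) s a n :=
  \sum_(0 <= t < n) gamma ^+ t * sa_law P rho pi t s a.

Lemma psum_cvg pi s a : is_policy pi -> cvgn (psum pi s a).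
Proof.
move=> Hp; have /andP[g0 g1] := Hg.
apply: nondecreasing_is_cvgn.
  apply/nondecreasing_seqP => n; rewrite /psum big_nat_recr //= lerDl.
  have /andP[h _] := sa_law_le1 Hrho HP Hp n s a.
  by rewrite mulr_ge0 // exprn_ge0 // ltW.
exists (((1 - gamma) ^+ 2)^-1) => _ [n _ <-].
apply: le_trans (geom_bound _ n); last by rewrite ltW.
rewrite /psum; apply: ler_sum => t _; apply: ler_wpM2l; first by rewrite exprn_ge0 // ltW.
have /andP[_ h] := sa_law_le1 Hrho HP Hp t s a.
by apply: (le_trans h); rewrite ler1n.
Qed.

Lemma occ_diff pi pi' (d : R) : is_policy pi -> is_policy pi' -> 0 <= d ->
  (forall s a, `|pi s a - pi' s a| <= d) ->
  \sum_(sa : S * A) `|occupation gamma P rho pi sa.1 sa.2 - occupation gamma P rho pi' sa.1 sa.2|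
    <= (#|A|%:R * d) * ((1 - gamma) ^+ 2)^-1.
Proof.
move=> Hp Hp' d0 hd; have /andP[g0 g1] := Hg.
have hc : (fun n => \sum_(sa : S * A) `|psum pi sa.1 sa.2 n - psum pi' sa.1 sa.2 n|)
   @ \oo --> \sum_(sa : S * A) `|occupation gamma P rho pi sa.1 sa.2 - occupation gamma P rho pi' sa.1 sa.2|.
  apply: (cvg_big add_continuous) => // sa _.
  apply: cvg_norm; apply: cvgB; exact: psum_cvg.
apply: (cvgr_to_le hc); apply: nearW => n.
apply: (@le_trans _ _ (\sum_(sa : S * A) \sum_(0 <= t < n) gamma ^+ t *
   `|sa_law P rho pi t sa.1 sa.2 - sa_law P rho pi' t sa.1 sa.2|)).
  apply: ler_sum => sa _; rewrite /psum -sumrB.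
  apply: (le_trans (ler_norm_sum _ _ _)); apply: ler_sum => t _.
  by rewrite -mulrBr normrM ger0_norm // exprn_ge0 // ltW.
rewrite exchange_big /=.
apply: (@le_trans _ _ (\sum_(0 <= t < n) gamma ^+ t * (t.+1%:R * (#|A|%:R * d)))).
  apply: ler_sum => t _; rewrite -mulr_sumr; apply: ler_wpM2l.
    by rewrite exprn_ge0 // ltW.
  exact: sa_sum.
under eq_bigr do rewrite mulrA (mulrC _ (_ * d)).
rewrite -mulr_sumr; apply: ler_wpM2l; first by rewrite mulr_ge0.
apply: geom_bound; by rewrite ltW.
Qed.
End Occ.

Lemma feat_lip (R : realType) (S A : finType) nc (Phi : S * A -> 'I_nc -> R)
  (mu mu' m : S -> A -> R) : (forall sa k, `|Phi sa k| <= 1) ->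
  feat_dist Phi mu m - feat_dist Phi mu' m <=
  nc%:R * \sum_(sa : S * A) `|mu sa.1 sa.2 - mu' sa.1 sa.2|.
Proof.
move=> hPhi; rewrite /feat_dist -sumrB.
apply: (@le_trans _ _ (\sum_(k < nc) \sum_(sa : S * A) `|mu sa.1 sa.2 - mu' sa.1 sa.2|));
  last by rewrite sumr_const card_ord mulr_natl.
apply: ler_sum => k _.
apply: (le_trans (lerB_dist _ _)).
set a := \sum_sa _ ; set a' := \sum_sa _ ; set b := \sum_sa _.
have -> : a - a' - (b - a') = a - b by ring.
rewrite /a /b -sumrB; apply: (le_trans (ler_norm_sum _ _ _)); apply: ler_sum => sa _.
rewrite -mulrBr normrM -[X in _ <= X]mul1r; apply: ler_wpM2r => //.
Qed.

Lemma env_lip (R : realType) (S A : finType) (N nc : nat) (gamma : R)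
    (P : 'I_N -> S -> A -> S -> R) (rho : S -> R)
    (piE : 'I_N -> S -> A -> R) (Phi : S * A -> 'I_nc -> R) i pi pi' (d : R) :
  0 < gamma < 1 -> is_distr rho -> (forall i, is_kernel (P i)) ->
  (forall sa k, `| Phi sa k | <= 1) ->
  is_policy pi -> is_policy pi' -> 0 <= d ->
  (forall s a, `|pi s a - pi' s a| <= d) ->
  env_loss gamma P rho Phi piE i pi <=
  env_loss gamma P rho Phi piE i pi' + d * (nc%:R * #|A|%:R / (1 - gamma) ^+ 2).
Proof.
move=> Hg Hrho HP hPhi Hp Hp' d0 hd.
rewrite -lerBlDl /env_loss.
apply: (le_trans (feat_lip _ _ _ hPhi)).
have := occ_diff Hrho (HP i) Hg Hp Hp' d0 hd.
have hn : 0 <= nc%:R :> R by [].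
move=> h; apply: (le_trans (ler_wpM2l hn h)).
by rewrite le_eqVlt; apply/orP; left; apply/eqP; ring.
Qed.

Unset Implicit Arguments. Set Strict Implicit.
Close Scope classical_set_scope.

Theorem proposition3 (R : realType) (S A : finType) (N nc : nat) (gamma : R)
    (P : 'I_N -> S -> A -> S -> R) (rho : S -> R)
    (piE : 'I_N -> S -> A -> R) (Phi : S * A -> 'I_nc -> R)
    (pi_cen : S -> A -> R) :
  (0 < N)%N -> 0 < gamma < 1 ->
  is_distr rho -> (forall i, is_kernel (P i)) ->
  (forall i, is_policy (piE i)) ->
  (forall sa k, `| Phi sa k | <= 1) ->
  S_cen gamma P rho Phi piE pi_cen ->
  (* (a) *)
  (forall (eps : R) (pis : 'I_N -> S -> A -> R) (pic : S -> A -> R) (i : 'I_N),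
      0 <= eps -> CAL_optimizer gamma P rho Phi piE eps pis pic ->
      Vbeta gamma P rho Phi piE (@unif R N) pi_cen
        <= Vbeta gamma P rho Phi piE (@unif R N) (pis i))
  /\
  (* (b) *)
  (forall (j : 'I_N) (pi_dec : S -> A -> R),
      S_dec gamma P rho Phi piE j pi_dec ->
      Vbeta gamma P rho Phi piE (@unif R N) pi_cen
        < Vbeta gamma P rho Phi piE (@unif R N) pi_dec ->
      exists eps : R, 0 < eps /\
        forall (pis : 'I_N -> S -> A -> R) (pic : S -> A -> R),
          CAL_optimizer gamma P rho Phi piE eps pis pic ->
          Vbeta gamma P rho Phi piE (@unif R N) (pis j)
            <= Vbeta gamma P rho Phi piE (@unif R N) pi_dec).
Proof.
move=> N0 Hg Hrho HP HE hPhi [Hcen1 Hcen2].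
set L := fun i pi => env_loss gamma P rho Phi piE i pi.
have VE : forall pi, Vbeta gamma P rho Phi piE (@unif R N) pi = N%:R^-1 * \sum_i L i pi.
  by move=> pi; rewrite /Vbeta /unif mulr_sumr.
have Ni : 0 < N%:R^-1 :> R by rewrite invr_gt0 ltr0n.
split.
  move=> eps pis pic i _ [[Hpis _] _].
  rewrite !VE ler_pM2l //; exact: Hcen2.
move=> j pi_dec _ Hlt.
move: Hlt; rewrite !VE => Hlt.
set Vc := N%:R^-1 * _ in Hlt *; set Vd := N%:R^-1 * _ in Hlt *.
set K : R := nc%:R * #|A|%:R / (1 - gamma) ^+ 2.
have K0 : 0 <= K.
  have /andP[_ g1] := Hg.
  by rewrite /K mulr_ge0 ?mulr_ge0 // invr_ge0 exprn_ge0 // subr_ge0 ltW.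
pose eps := (Vd - Vc) / (2 * K + 1).
have den : 0 < 2 * K + 1 by lra.
have epos : 0 < eps by rewrite /eps divr_gt0 // subr_gt0.
have e2K : 2 * eps * K <= Vd - Vc.
  have -> : 2 * eps * K = (Vd - Vc) * (2 * K / (2 * K + 1)).
    by rewrite /eps; field; rewrite gt_eqF.
  rewrite ler_piMr ?subr_ge0 ?ltW //.
  by rewrite ltr_pdivrMr // mul1r ltrDl.
exists eps; split => // pis pic [[Hpis [Hpic Hclose]] Hopt].
have Hob : \sum_i L i (pis i) <= \sum_i L i pi_cen.
  apply: (Hopt (fun _ => pi_cen) pi_cen); split => //; split => // i s a.
  by rewrite subrr normr0 ltW.
have Hi : forall i, L i (pis j) <= L i (pis i) + 2 * eps * K.
  move=> i; rewrite /L; apply: (env_lip piE i Hg Hrho HP hPhi (Hpis j) (Hpis i)).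
    by rewrite mulr_ge0 // ltW.
  move=> s a; have h1 := Hclose j s a; have h2 := Hclose i s a.
  have -> : pis j s a - pis i s a = (pis j s a - pic s a) - (pis i s a - pic s a) by ring.
  apply: (le_trans (ler_normB _ _)); lra.
have Hs : \sum_i L i (pis j) <= \sum_i L i pi_cen + N%:R * (2 * eps * K).
  apply: (le_trans (ler_sum _ (fun i _ => Hi i))).
  by rewrite big_split /= sumr_const card_ord [in X in _ <= X]mulr_natl lerD2r.
rewrite VE.
apply: (@le_trans _ _ (N%:R^-1 * (\sum_i L i pi_cen + N%:R * (2 * eps * K)))).
  by rewrite ler_pM2l.
have NN : N%:R != 0 :> R by rewrite pnatr_eq0 -lt0n.
rewrite mulrDr mulrA mulVf // mul1r -/Vc; lra.
Qed.
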